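(* Let $K=\mathbb{Q}(\alpha,i)$ where $\alpha$ is a root of $x^3-93x+124$ (field $\Gamma_1$), of $x^3-129x-344$ (field $\Gamma_4$), or of $x^3-21x-28$ (field $\Omega_1$); let $F=\mathbb{Q}(\alpha)$ and $\rho$ complex conjugation. Let $\mathfrak{p}$ be a prime of $F$ above $2$ and $\mathfrak{P}$ the prime of $K$ above $\mathfrak{p}$ (one has $\mathfrak{p}\mathcal{O}_K=\mathfrak{P}^2$), and let $\chi_{\mathfrak{p}}:F_{\mathfrak{p}}^\times\to\{\pm1\}$ be the quadratic character associated with $K_{\mathfrak{P}}/F_{\mathfrak{p}}$. Then there exists a homomorphism $\widetilde{\chi_{\mathfrak{P}}}:\mathcal{O}_{K_{\mathfrak{P}}}^\times\to\{\pm1,\pm i\}$ such that $\widetilde{\chi_{\mathfrak{P}}}|_{\mathcal{O}_{F_{\mathfrak{p}}}^\times}=\chi_{\mathfrak{p}}|_{\mathcal{O}_{F_{\mathfrak{p}}}^\times}$, $\widetilde{\chi_{\mathfrak{P}}}(i)=i$, and $\widetilde{\chi_{\mathfrak{P}}}(x^\rho)=\widetilde{\chi_{\mathfrak{P}}}(x)^\rho$ for all $x\in\mathcal{O}_{K_{\mathfrak{P}}}^\times$.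
   Context: $K$ is a CM field cyclic of degree 6 over $\mathbb{Q}$ with cubic subfield $F$; $2$ splits completely in $F$ and each prime of $F$ above $2$ ramifies in $K$, so $\rho$ fixes $\mathfrak{P}$ and acts on $K_{\mathfrak{P}}$. *)

(* Defs.v *)
(* Local fields are handled abstractly: the completion K_P is
   any complete discretely-valued field L with a dense embedding of K. *)
From HB Require Import structures.
From mathcomp Require Import all_boot all_order all_algebra all_field.
Set Implicit Arguments. Unset Strict Implicit. Unset Printing Implicit Defensive.
Import Order.TTheory GRing.Theory Num.Theory.
Local Open Scope ring_scope.

(* v : L -> int is a (discrete, additively written) valuation on L^x;
   the value at 0 is irrelevant (0 has valuation +oo). *)
Definition is_dval (L : fieldType) (v : L -> int) : Prop :=
  (forall x y : L, x != 0 -> y != 0 -> v (x * y) = v x + v y) /\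
  (forall x y : L, x != 0 -> y != 0 -> x + y != 0 ->
     Num.min (v x) (v y) <= v (x + y)).

Definition vge (L : fieldType) (v : L -> int) (x : L) (n : int) : Prop :=
  x = 0 \/ n <= v x.

Definition vcomplete (L : fieldType) (v : L -> int) : Prop :=
  forall u : nat -> L,
    (forall n : int, exists N : nat, forall m k : nat,
        (N <= m)%N -> (N <= k)%N -> vge v (u m - u k) n) ->
    exists l : L, forall n : int, exists N : nat, forall m : nat,
        (N <= m)%N -> vge v (u m - l) n.

Definition vdense (K L : fieldType) (v : L -> int) (iota : K -> L) : Prop :=
  forall (x : L) (n : int), exists y : K, vge v (x - iota y) n.

Definition vclosure (L : fieldType) (v : L -> int) (S : L -> Prop) (x : L) : Prop :=
  forall n : int, exists y : L, S y /\ vge v (x - y) n.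

Definition vunit (L : fieldType) (v : L -> int) (x : L) : Prop :=
  x != 0 /\ v x = 0.

Definition generated_by (K : fieldType) (a j : K) : Prop :=
  forall x : K, exists c : 'I_3 -> 'I_2 -> rat,
    x = \sum_(k < 3) \sum_(l < 2) ratr (c k l) * a ^+ k * j ^+ l.

Definition in_Qa (K : fieldType) (a x : K) : Prop :=
  exists c : 'I_3 -> rat, x = \sum_(k < 3) ratr (c k) * a ^+ k.

(* Main.v *)
Require Import Defs.
From HB Require Import structures.
From mathcomp Require Import all_boot all_order all_algebra all_field.
From mathcomp Require Import zify ring lra.
From Stdlib Require Import ClassicalEpsilon.
Import Order.TTheory GRing.Theory Num.Theory.
Set Implicit Arguments. Unset Strict Implicit. Unset Printing Implicit Defensive.
Local Open Scope ring_scope.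
Lemma vP1 (L : fieldType) (v : L -> int) : is_dval v -> v 1 = 0.
Proof. move=> [hM _]. have := hM 1 1 (oner_neq0 _) (oner_neq0 _). rewrite mulr1. lia. Qed.

Lemma vPN (L : fieldType) (v : L -> int) (x : L) : is_dval v -> v (- x) = v x.
Proof.
move=> hv; have [hM _] := hv.
have n10 : (-1 : L) != 0 by rewrite oppr_eq0 oner_eq0.
have hn1 : v (-1) = 0.
  have := hM (-1) (-1) n10 n10.
  rewrite mulrNN mulr1 (vP1 hv). lia.
case: (eqVneq x 0) => [->|x0]; first by rewrite oppr0.
have := hM (-1) x n10 x0. rewrite mulN1r hn1 add0r. by [].
Qed.

Lemma vgeP (L : fieldType) (v : L -> int) x n : x != 0 -> vge v x n -> n <= v x.
Proof. by move=> x0 [/eqP|//]; rewrite (negbTE x0). Qed.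

Lemma vge0 (L : fieldType) (v : L -> int) n : vge v 0 n.
Proof. by left. Qed.

Lemma vge_refl (L : fieldType) (v : L -> int) x : vge v x (v x).
Proof. by right. Qed.

Lemma vge_le (L : fieldType) (v : L -> int) x n m : vge v x n -> m <= n -> vge v x m.
Proof. case => [->|h] hm; [left=>// | right; exact: le_trans hm h]. Qed.

Lemma vgeD (L : fieldType) (v : L -> int) x y n : is_dval v ->
  vge v x n -> vge v y n -> vge v (x + y) n.
Proof.
move=> [_ hU] hx hy.
case: (eqVneq x 0) => [->|x0]; first by rewrite add0r.
case: (eqVneq y 0) => [->|y0]; first by rewrite addr0.
case: (eqVneq (x + y) 0) => [->|s0]; first by left.
right; apply: le_trans (hU x y x0 y0 s0).
by rewrite le_min (vgeP x0 hx) (vgeP y0 hy).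
Qed.

Lemma vgeN (L : fieldType) (v : L -> int) x n : is_dval v -> vge v x n -> vge v (- x) n.
Proof. move=> hv [->|h]; first by rewrite oppr0; left. by right; rewrite vPN. Qed.

Lemma vgeNE (L : fieldType) (v : L -> int) x n : is_dval v -> vge v (- x) n -> vge v x n.
Proof. move=> hv h; rewrite -(opprK x); exact: vgeN. Qed.

Lemma vgeB (L : fieldType) (v : L -> int) x y n : is_dval v ->
  vge v x n -> vge v y n -> vge v (x - y) n.
Proof. move=> hv hx hy; apply: vgeD => //; exact: vgeN. Qed.

Lemma vgeM (L : fieldType) (v : L -> int) x y n m : is_dval v ->
  vge v x n -> vge v y m -> vge v (x * y) (n + m).
Proof.
move=> [hM _] hx hy.
case: (eqVneq x 0) => [->|x0]; first by rewrite mul0r; left.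
case: (eqVneq y 0) => [->|y0]; first by rewrite mulr0; left.
right; rewrite hM //; exact: lerD (vgeP x0 hx) (vgeP y0 hy).
Qed.

Lemma vge_eq0 (L : fieldType) (v : L -> int) x : (forall n, vge v x n) -> x = 0.
Proof.
move=> h; apply/eqP; apply/negPn/negP => x0.
have := vgeP x0 (h (v x + 1)). lia.
Qed.

Lemma vgeDr (L : fieldType) (v : L -> int) x y n : is_dval v ->
  vge v (x + y) n -> vge v y n -> vge v x n.
Proof. move=> hv h1 h2; have -> : x = (x + y) - y by rewrite addrK. exact: vgeB. Qed.

Lemma vge_trans (L : fieldType) (v : L -> int) x y z n : is_dval v ->
  vge v (x - y) n -> vge v (y - z) n -> vge v (x - z) n.
Proof. move=> hv h1 h2; have -> : x - z = (x - y) + (y - z) by ring. exact: vgeD. Qed.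

Lemma vge_sym (L : fieldType) (v : L -> int) x y n : is_dval v ->
  vge v (x - y) n -> vge v (y - x) n.
Proof. move=> hv h; rewrite -opprB; exact: vgeN. Qed.

Lemma vge_int (L : fieldType) (v : L -> int) (m : int) : is_dval v -> vge v (m%:~R) 0.
Proof.
move=> hv.
have hn : forall n : nat, vge v (n%:R : L) 0.
  elim=> [|n ih]; first by left.
  rewrite mulrSr; apply: vgeD => //; right; by rewrite (vP1 hv).
case: m => n; first exact: hn.
rewrite NegzE mulrNz; apply: vgeN => //; exact: hn.
Qed.

Lemma intr_neq0 (L : fieldType) (m : int) : [pchar L] =i pred0 -> m != 0 -> (m%:~R : L) != 0.
Proof.
move=> hc m0; have hc' := (pcharf0P L).1 hc.
case: m m0 => n m0.
  by rewrite /= hc'; apply: contra m0 => /eqP ->.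
by rewrite NegzE mulrNz oppr_eq0 hc'.
Qed.

Lemma v_odd (L : fieldType) (v : L -> int) (k : int) : is_dval v -> 0 < v 2 ->
  [pchar L] =i pred0 -> v ((2 * k + 1)%:~R) = 0.
Proof.
move=> hv hd hc.
have y0 : ((2 * k + 1)%:~R : L) != 0 by apply: intr_neq0 => //; lia.
have h0 := vgeP y0 (vge_int (2 * k + 1) hv).
suff : ~ (1 <= v ((2 * k + 1)%:~R)) by lia.
move=> h1.
have e : (1 : L) = (2 * k + 1)%:~R - 2 * k%:~R by rewrite intrD intrM /=; ring.
have h2 : vge v (2 * (k%:~R : L)) 1.
  apply: vge_le (vgeM hv (vge_refl v 2) (vge_int k hv)) _; lia.
have := vgeB hv (or_intror h1 : vge v ((2 * k + 1)%:~R : L) 1) h2.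
rewrite -e => [[/eqP|]]; first by rewrite oner_eq0.
rewrite (vP1 hv); lia.
Qed.

Lemma v2X (L : fieldType) (v : L -> int) (e : nat) : is_dval v -> [pchar L] =i pred0 ->
  v (2 ^+ e) = e%:Z * v 2.
Proof.
move=> hv hc; have [hM _] := hv.
have t0 : (2 : L) != 0 by exact: (intr_neq0 (L:=L) (m:=2) hc isT).
elim: e => [|e ih]; first by rewrite expr0 (vP1 hv) mul0r.
rewrite exprS hM // ?expf_neq0 // ih; lia.
Qed.
Definition SQ (L : fieldType) (x : L) : Prop :=
  exists M D : int, D != 0 /\ x = M%:~R / D%:~R.
Definition SQJ (L : fieldType) (J x : L) : Prop :=
  exists M N D : int, D != 0 /\ x = (M%:~R + N%:~R * J) / D%:~R.

Lemma cl_of (L : fieldType) (v : L -> int) (S : L -> Prop) x : S x -> vclosure v S x.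
Proof. move=> h n; exists x; split => //; rewrite subrr; by left. Qed.

Lemma cl_mono (L : fieldType) (v : L -> int) (S T : L -> Prop) x :
  (forall y, S y -> T y) -> vclosure v S x -> vclosure v T x.
Proof. move=> hST h n; have [y [hy hx]] := h n; exists y; split => //; exact: hST. Qed.

Lemma cl_cl (L : fieldType) (v : L -> int) (S : L -> Prop) x : is_dval v ->
  vclosure v (vclosure v S) x -> vclosure v S x.
Proof.
move=> hv h n; have [y [hy hx]] := h n; have [z [hz hyz]] := hy n.
exists z; split => //; exact: vge_trans hx hyz.
Qed.

Lemma cl_add (L : fieldType) (v : L -> int) (S : L -> Prop) x y : is_dval v ->
  (forall a b, S a -> S b -> S (a + b)) ->
  vclosure v S x -> vclosure v S y -> vclosure v S (x + y).
Proof.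
move=> hv hS hx hy n; have [a [ha hxa]] := hx n; have [b [hb hyb]] := hy n.
exists (a + b); split; first exact: hS.
have -> : x + y - (a + b) = (x - a) + (y - b) by ring.
exact: vgeD.
Qed.

Lemma cl_mul (L : fieldType) (v : L -> int) (S : L -> Prop) x y : is_dval v ->
  (forall a b, S a -> S b -> S (a * b)) ->
  vclosure v S x -> vclosure v S y -> vclosure v S (x * y).
Proof.
move=> hv hS hx hy n.
have [b [hb hyb]] := hy (n - v x).
have hbB : vge v b (Num.min (v y) (n - v x)).
  have -> : b = y - (y - b) by ring.
  apply: vgeB => //.
    by apply: vge_le (vge_refl v y) _; rewrite ge_min lexx.
  by apply: vge_le hyb _; rewrite ge_min lexx orbT.
have [a [ha hxa]] := hx (n - Num.min (v y) (n - v x)).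
exists (a * b); split; first exact: hS.
have -> : x * y - a * b = x * (y - b) + (x - a) * b by ring.
apply: vgeD => //.
  case: (eqVneq x 0) => [->|x0]; first by rewrite mul0r; left.
  apply: vge_le (vgeM hv (vge_refl v x) hyb) _; lia.
apply: vge_le (vgeM hv hxa hbB) _; lia.
Qed.

Lemma cl_sum (L : fieldType) (v : L -> int) (S : L -> Prop) (I : finType) (F : I -> L) :
  is_dval v -> S 0 -> (forall a b, S a -> S b -> S (a + b)) ->
  (forall i, vclosure v S (F i)) -> vclosure v S (\sum_i F i).
Proof.
move=> hv h0 hS hF; apply: (big_ind (vclosure v S)) => //.
  exact: cl_of.
move=> a b; exact: cl_add.
Qed.

Lemma SQ_add (L : fieldType) : [pchar L] =i pred0 ->
  forall a b : L, SQ a -> SQ b -> SQ (a + b).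
Proof.
move=> hc a b [M [D [D0 ->]]] [M' [D' [D0' ->]]].
exists (M * D' + M' * D), (D * D'); split; first by rewrite mulf_neq0.
have h1 := intr_neq0 hc D0; have h2 := intr_neq0 hc D0'.
rewrite !intrD !intrM; field; by rewrite h1 h2.
Qed.

Lemma SQ_mul (L : fieldType) : [pchar L] =i pred0 ->
  forall a b : L, SQ a -> SQ b -> SQ (a * b).
Proof.
move=> hc a b [M [D [D0 ->]]] [M' [D' [D0' ->]]].
exists (M * M'), (D * D'); split; first by rewrite mulf_neq0.
have h1 := intr_neq0 hc D0; have h2 := intr_neq0 hc D0'.
rewrite !intrM; field; by rewrite h1 h2.
Qed.

Lemma SQ0 (L : fieldType) : SQ (0 : L).
Proof. exists 0, 1; split => //; by rewrite mul0r. Qed.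

Lemma SQ_ratr (L : fieldType) (c : rat) : SQ (ratr c : L).
Proof. exists (numq c), (denq c); split => //; exact: denq_neq0. Qed.

Lemma SQJ_add (L : fieldType) (J : L) : [pchar L] =i pred0 ->
  forall a b : L, SQJ J a -> SQJ J b -> SQJ J (a + b).
Proof.
move=> hc a b [M [N [D [D0 ->]]]] [M' [N' [D' [D0' ->]]]].
exists (M * D' + M' * D), (N * D' + N' * D), (D * D'); split; first by rewrite mulf_neq0.
have h1 := intr_neq0 hc D0; have h2 := intr_neq0 hc D0'.
rewrite !intrD !intrM; field; by rewrite h1 h2.
Qed.

Lemma SQJ_mul (L : fieldType) (J : L) : [pchar L] =i pred0 -> J ^+ 2 = -1 ->
  forall a b : L, SQJ J a -> SQJ J b -> SQJ J (a * b).
Proof.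
move=> hc hJ a b [M [N [D [D0 ->]]]] [M' [N' [D' [D0' ->]]]].
exists (M * M' - N * N'), (M * N' + N * M'), (D * D'); split; first by rewrite mulf_neq0.
have h1 := intr_neq0 hc D0; have h2 := intr_neq0 hc D0'.
have e : (M%:~R + N%:~R * J) / D%:~R * ((M'%:~R + N'%:~R * J) / D'%:~R) =
   ((M * M' - N * N')%:~R + (M * N' + N * M')%:~R * J) / (D * D')%:~R
   + (N%:~R * N'%:~R * (J ^+ 2 + 1)) / (D * D')%:~R.
  rewrite ?intrD ?intrB ?intrN !intrM; field; by rewrite h1 h2.
by rewrite e hJ addNr mulr0 mul0r addr0.
Qed.

Lemma SQJ_of_SQ (L : fieldType) (J x : L) : SQ x -> SQJ J x.
Proof. move=> [M [D [D0 ->]]]; exists M, 0, D; split => //; by rewrite mul0r addr0. Qed.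

Lemma SQJ0 (L : fieldType) (J : L) : SQJ J 0.
Proof. exact: SQJ_of_SQ (SQ0 L). Qed.

Lemma SQJ_J (L : fieldType) (J : L) : SQJ J J.
Proof. exists 0, 1, 1; split => //; by rewrite add0r mul1r divr1. Qed.
Lemma vX (L : fieldType) (v : L -> int) (x : L) (e : nat) : is_dval v -> x != 0 ->
  v (x ^+ e) = e%:Z * v x.
Proof.
move=> hv x0; have [hM _] := hv.
elim: e => [|e ih]; first by rewrite expr0 (vP1 hv) mul0r.
rewrite exprS hM // ?expf_neq0 // ih; lia.
Qed.

Lemma vV (L : fieldType) (v : L -> int) (x : L) : is_dval v -> x != 0 -> v (x^-1) = - v x.
Proof.
move=> hv x0; have [hM _] := hv.
have := hM x x^-1 x0 (invr_neq0 x0). rewrite mulfV // (vP1 hv). lia.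
Qed.

Lemma SQ_int (L : fieldType) (m : int) : SQ (m%:~R : L).
Proof. exists m, 1; split => //; by rewrite divr1. Qed.

Lemma SQ_invint (L : fieldType) (m : int) : m != 0 -> SQ ((m%:~R : L)^-1).
Proof. move=> m0; exists 1, m; split => //; by rewrite mul1r. Qed.

Lemma integral_root (L : fieldType) (v : L -> int) (A : L) (P Q : int) : is_dval v ->
  A ^+ 3 + P%:~R * A + Q%:~R = 0 -> vge v A 0.
Proof.
move=> hv hf.
case: (eqVneq A 0) => [->|A0]; first by left.
right; apply/negPn/negP; rewrite -ltNge => hA.
have e : A ^+ 3 = - (P%:~R * A + Q%:~R) by rewrite -[RHS]add0r -hf; ring.
have h1 : vge v (P%:~R * A + Q%:~R) (v A).
  apply: vgeD => //.
    by apply: vge_le (vgeM hv (vge_int P hv) (vge_refl v A)) _; lia.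
  by apply: vge_le (vge_int Q hv) _; lia.
have h2 := vgeN hv h1; rewrite -e in h2.
have := vgeP (expf_neq0 3 A0) h2; rewrite (vX 3 hv A0). lia.
Qed.

Lemma contract (L : fieldType) (v : L -> int) (A : L) (P Q r mu : int) :
  is_dval v -> [pchar L] =i pred0 ->
  A ^+ 3 + P%:~R * A + Q%:~R = 0 -> (3 * r ^+ 2 + P) != 0 ->
  v ((3 * r ^+ 2 + P)%:~R) + 1 <= mu -> 0 <= mu ->
  vge v (A - r%:~R) mu -> vclosure v (@SQ L) A.
Proof.
move=> hv hc hf c0 hmu mu0 hA.
set c := 3 * r ^+ 2 + P in c0 hmu.
set C := (c%:~R : L).
have C0 : C != 0 by exact: intr_neq0.
have hQ : Q%:~R = - (A ^+ 3 + P%:~R * A) :> L.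
  have -> : (Q%:~R : L) = (A ^+ 3 + P%:~R * A + Q%:~R) - (A ^+ 3 + P%:~R * A) by ring.
  by rewrite hf add0r.
have step : forall N : nat, exists q : L, SQ q /\ vge v (A - q) (mu + N%:Z).
  elim=> [|N [q [hq hAq]]].
    by exists r%:~R; split; [exact: SQ_int | rewrite addr0].
  set q' := q - (q ^+ 3 + P%:~R * q + Q%:~R) * C^-1.
  exists q'; split.
    rewrite /q'; apply: SQ_add => //; rewrite -mulN1r; apply: SQ_mul => //.
      exact: (SQ_int _ (-1)).
    apply: SQ_mul => //; last exact: SQ_invint.
    apply: SQ_add => //; last exact: SQ_int.
    apply: SQ_add => //; last by apply: SQ_mul => //; exact: SQ_int.
    by rewrite exprS expr2; do 2! apply: SQ_mul => //.
  set R := (r%:~R : L).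
  set h := A ^+ 2 + A * q + q ^+ 2 + P%:~R.
  have e1 : A - q' = (A - q) * ((C - h) * C^-1).
    rewrite /q' /h hQ; field; exact: C0.
  set s := A - R; set t := q - R.
  have e2 : C - h = - (3 * R * (s + t) + s * s + s * t + t * t).
    rewrite /C /h /s /t /c /R intrD intrM rmorphXn /=; ring.
  have hs : vge v s mu by [].
  have ht : vge v t mu.
    have -> : t = - (A - q) + s by rewrite /t /s; ring.
    apply: vgeD => //; apply: vgeN => //; apply: vge_le hAq _; lia.
  have hCh : vge v (C - h) mu.
    rewrite e2; apply: vgeN => //.
    have hR : vge v (3 * R) 0.
      have -> : 3 * R = (3 * r)%:~R by rewrite intrM.
      exact: vge_int.
    have hmm : forall x y, vge v x mu -> vge v y mu -> vge v (x * y) mu.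
      by move=> x y hx hy; apply: vge_le (vgeM hv hx hy) _; lia.
    apply: vgeD => //; last exact: hmm.
    apply: vgeD => //; last exact: hmm.
    apply: vgeD => //; last exact: hmm.
    by apply: vge_le (vgeM hv hR (vgeD hv hs ht)) _; lia.
  have hCi : vge v (C^-1) (- v C) by right; rewrite (vV hv C0).
  rewrite e1; apply: vge_le (vgeM hv hAq (vgeM hv hCh hCi)) _.
  rewrite /C; lia.
move=> n; have [q [hq hAq]] := step (absz n).
exists q; split => //; apply: vge_le hAq _; lia.
Qed.

Lemma cubic_gen (L : fieldType) (v : L -> int) (A : L) (P Q r0 r1 r2 g2 g1 g0 k0 k1 k2 : int) :
  is_dval v -> 0 < v 2 -> [pchar L] =i pred0 ->
  A ^+ 3 + P%:~R * A + Q%:~R = 0 ->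
  (A - r0%:~R) * (A - r1%:~R) * (A - r2%:~R) = 2 ^+ 4 * (g2%:~R * A ^+ 2 + g1%:~R * A + g0%:~R) ->
  3 * r0 ^+ 2 + P = 2 * k0 + 1 ->
  3 * r1 ^+ 2 + P = 2 * (2 * k1 + 1) ->
  3 * r2 ^+ 2 + P = 2 * (2 * k2 + 1) ->
  vclosure v (@SQ L) A.
Proof.
move=> hv hd hc hf hPi hc0 hc1 hc2.
have [hM _] := hv.
have hA := integral_root hv hf.
have hAr : forall r : int, vge v (A - r%:~R) 0.
  by move=> r; apply: vgeB => //; exact: vge_int.
have t0 : (2 : L) != 0 by exact: (intr_neq0 (L:=L) (m:=2) hc isT).
have vodd2 : forall k : int, v ((2 * (2 * k + 1))%:~R : L) = v 2.
  move=> k; rewrite intrM hM ?(v_odd k hv hd hc) ?addr0 //.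
  apply: intr_neq0 => //; lia.
have c10 : 3 * r1 ^+ 2 + P != 0 by rewrite hc1; lia.
have c20 : 3 * r2 ^+ 2 + P != 0 by rewrite hc2; lia.
have reg0 : vge v (A - r0%:~R) 1 -> vclosure v (@SQ L) A.
  move=> h0; apply: (@contract L v A P Q r0 1) => //.
  - by rewrite hc0; lia.
  - by rewrite hc0 (v_odd k0 hv hd hc).
case: (eqVneq (A - r0%:~R) 0) => [e0|n0]; first by apply: reg0; rewrite e0; left.
case: (boolP (1 <= v (A - r0%:~R))) => [h0|h0]; first by apply: reg0; right.
have {}h0 : v (A - r0%:~R) = 0 by have := vgeP n0 (hAr r0); lia.
case: (eqVneq (A - r1%:~R) 0) => [e1|n1].
  apply: (@contract L v A P Q r1 (v 2 + 1)) => //; try lia.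
  - by rewrite hc1 vodd2.
  - by rewrite e1; left.
case: (eqVneq (A - r2%:~R) 0) => [e2|n2].
  apply: (@contract L v A P Q r2 (v 2 + 1)) => //; try lia.
  - by rewrite hc2 vodd2.
  - by rewrite e2; left.
have hpi : vge v ((A - r0%:~R) * (A - r1%:~R) * (A - r2%:~R)) (4%:Z * v 2 + 0).
  rewrite hPi; apply: vgeM => //; first by right; rewrite (v2X 4 hv hc).
  apply: vgeD => //; last exact: vge_int.
  apply: vgeD => //.
    by apply: vge_le (vgeM hv (vge_int g2 hv) (vgeM hv hA hA : vge v (A ^+ 2) (0 + 0))) _.
  exact: vge_le (vgeM hv (vge_int g1 hv) hA) _.
have := vgeP (mulf_neq0 (mulf_neq0 n0 n1) n2) hpi.
rewrite !hM ?mulf_neq0 // h0 => hsum.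
have v1 := vgeP n1 (hAr r1); have v2 := vgeP n2 (hAr r2).
case: (boolP (v 2 + 1 <= v (A - r1%:~R))) => [h1|h1].
  apply: (@contract L v A P Q r1 (v 2 + 1)) => //; try lia.
  - by rewrite hc1 vodd2.
  - by right.
case: (boolP (v 2 + 1 <= v (A - r2%:~R))) => [h2|h2].
  apply: (@contract L v A P Q r2 (v 2 + 1)) => //; try lia.
  - by rewrite hc2 vodd2.
  - by right.
exfalso. lia.
Qed.
Lemma par_split (M : int) : (exists k, M = 2 * k) \/ (exists k, M = 2 * k + 1).
Proof.
have h := divz_eq M 2. have h1 := modz_ge0 M (isT : (2:int) != 0).
have h2 := ltz_pmod M (isT : (0:int) < 2).
have [e|e] : (M %% 2 = 0)%Z \/ (M %% 2 = 1)%Z by lia.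
  by left; exists (M %/ 2)%Z; lia.
by right; exists (M %/ 2)%Z; lia.
Qed.

Lemma dec2 (D : int) : D != 0 -> exists (e : nat) (k : int), D = 2 ^+ e * (2 * k + 1).
Proof.
move: {2}(absz D) (leqnn (absz D)) => n; elim: n D => [|n ih] D hn D0.
  exfalso; move: D0 hn; lia.
case: (par_split D) => [[D1 e]|[k e]]; last by exists 0%N, k; rewrite expr0 mul1r.
have h1 : (absz D1 <= n)%N by lia.
have h2 : D1 != 0 by lia.
have [e1 [k ek]] := ih D1 h1 h2.
by exists e1.+1, k; rewrite exprS -mulrA -ek.
Qed.

Lemma vJ0 (L : fieldType) (v : L -> int) (J : L) : is_dval v -> J ^+ 2 = -1 ->
  J != 0 /\ v J = 0.
Proof.
move=> hv hJ.
have J0 : J != 0 by apply/negP => /eqP J0; move: hJ; rewrite J0 expr0n /= => /eqP; rewrite eq_sym oppr_eq0 oner_eq0.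
split => //; have := vX 2 hv J0; rewrite hJ vPN // (vP1 hv). lia.
Qed.

Lemma v1J (L : fieldType) (v : L -> int) (J : L) : is_dval v -> [pchar L] =i pred0 ->
  J ^+ 2 = -1 -> 1 + J != 0 /\ 2 * v (1 + J) = v 2.
Proof.
move=> hv hc hJ; have [J0 vJ] := vJ0 hv hJ; have [hM _] := hv.
have t0 : (2 : L) != 0 by exact: (intr_neq0 (L:=L) (m:=2) hc isT).
have e : (1 + J) ^+ 2 = 2 * J by rewrite sqrrD hJ; ring.
have n0 : 1 + J != 0.
  by apply/negP => /eqP h0; move: e; rewrite h0 expr0n /= => /eqP; rewrite eq_sym mulf_eq0 (negbTE t0) (negbTE J0).
split => //; have := vX 2 hv n0; rewrite e hM // vJ. lia.
Qed.

Lemma div2_base (L : fieldType) (v : L -> int) (J : L) (M N : int) :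
  is_dval v -> 0 < v 2 -> [pchar L] =i pred0 -> J ^+ 2 = -1 ->
  vge v (M%:~R + N%:~R * J) (v 2) -> exists M' N', M = 2 * M' /\ N = 2 * N'.
Proof.
move=> hv hd hc hJ h.
have [J0 vJ] := vJ0 hv hJ; have [n1J v1J'] := v1J hv hc hJ; have [hM _] := hv.
have vN2 : forall l : int, vge v ((2 * l)%:~R * J) (v 2).
  move=> l; rewrite intrM -mulrA.
  apply: vge_le (vgeM hv (vge_refl v 2) (vgeM hv (vge_int l hv) (vge_refl v J))) _; lia.
case: (par_split M) => [[k ek]|[k ek]]; case: (par_split N) => [[l el]|[l el]].
- by exists k, l.
- exfalso; have hM2 : vge v (M%:~R : L) (v 2).
    rewrite ek intrM; apply: vge_le (vgeM hv (vge_refl v 2) (vge_int k hv)) _; lia.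
  have : vge v (N%:~R * J) (v 2).
    by apply: (@vgeDr L v _ (M%:~R) (v 2) hv _ hM2); rewrite addrC.
  have N0 : (N%:~R : L) != 0 by apply: intr_neq0 => //; lia.
  move/(vgeP (mulf_neq0 N0 J0)); rewrite hM // vJ el (v_odd l hv hd hc); lia.
- exfalso; have hNJ : vge v (N%:~R * J) (v 2) by rewrite el; exact: vN2.
  have := @vgeDr L v (M%:~R) (N%:~R * J) (v 2) hv h hNJ.
  have M0 : (M%:~R : L) != 0 by apply: intr_neq0 => //; lia.
  move/(vgeP M0); rewrite ek (v_odd k hv hd hc); lia.
- exfalso.
  have e : (M%:~R + N%:~R * J : L) = (2 * (k - l))%:~R + N%:~R * (1 + J).
    by rewrite ek el !intrD !intrM intrB /=; ring.
  have : vge v (N%:~R * (1 + J)) (v 2).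
    apply: (@vgeDr L v _ ((2 * (k - l))%:~R) (v 2) hv); first by rewrite addrC -e.
    by rewrite intrM; apply: vge_le (vgeM hv (vge_refl v 2) (vge_int (k - l) hv)) _; lia.
  have N0 : (N%:~R : L) != 0 by apply: intr_neq0 => //; lia.
  move/(vgeP (mulf_neq0 N0 n1J)); rewrite hM // el (v_odd l hv hd hc); lia.
Qed.

Lemma div2e (L : fieldType) (v : L -> int) (J : L) (e : nat) :
  is_dval v -> 0 < v 2 -> [pchar L] =i pred0 -> J ^+ 2 = -1 ->
  forall M N : int, vge v (M%:~R + N%:~R * J) (e%:Z * v 2) ->
  exists M' N', M = 2 ^+ e * M' /\ N = 2 ^+ e * N'.
Proof.
move=> hv hd hc hJ; have [hM _] := hv.
elim: e => [|e ih] M N h.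
  by exists M, N; rewrite expr0 !mul1r.
have h' : vge v (M%:~R + N%:~R * J) (e%:Z * v 2) by apply: vge_le h _; lia.
have [M1 [N1 [e1 e2]]] := ih M N h'.
have e3 : (M%:~R + N%:~R * J : L) = 2 ^+ e * (M1%:~R + N1%:~R * J).
  by rewrite e1 e2 !intrM !rmorphXn /=; ring.
have t0 : (2 : L) != 0 by exact: (intr_neq0 (L:=L) (m:=2) hc isT).
have h1 : vge v (M1%:~R + N1%:~R * J) (v 2).
  case: (eqVneq (M1%:~R + N1%:~R * J : L) 0) => [->|n0]; first by left.
  right; have n0' : (M%:~R + N%:~R * J : L) != 0 by rewrite e3 mulf_neq0 // expf_neq0.
  have := vgeP n0' h; rewrite e3 hM ?expf_neq0 // (v2X e hv hc); lia.
have [M2 [N2 [f1 f2]]] := div2_base hv hd hc hJ h1.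
by exists M2, N2; rewrite e1 e2 f1 f2 exprSr !mulrA.
Qed.
Definition z4 (m : int) : 'Z_4 := m%:~R.
Definition k4 (u w : 'Z_4) : nat :=
  if u == 1 then 0%N else if u == 3%:R then 2%N else if w == 1 then 1%N else 3%N.
Definition odd4 (u : 'Z_4) : bool := (u == 1) || (u == 3%:R).

Lemma kmul : forall u w u' w' : 'Z_4, odd4 u != odd4 w -> odd4 u' != odd4 w' ->
  k4 (u * u' - w * w') (u * w' + w * u') = ((k4 u w + k4 u' w') %% 4)%N.
Proof. by do 4! case=> [[|[|[|[|?]]]] ?]. Qed.

Lemma kconj : forall u w : 'Z_4, odd4 u != odd4 w -> k4 u (- w) = ((3 * k4 u w) %% 4)%N.
Proof. by do 2! case=> [[|[|[|[|?]]]] ?]. Qed.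

Lemma knorm : forall u w : 'Z_4, odd4 u != odd4 w -> k4 (u * u + w * w) 0 = 0%N.
Proof. by do 2! case=> [[|[|[|[|?]]]] ?]. Qed.

Lemma z4_odd (k : int) : odd4 (z4 (2 * k + 1)).
Proof.
rewrite /z4 intrD intrM; move: (k%:~R : 'Z_4).
by case=> [[|[|[|[|?]]]] ?].
Qed.

Lemma z4_even (k : int) : ~~ odd4 (z4 (2 * k)).
Proof.
rewrite /z4 intrM; move: (k%:~R : 'Z_4).
by case=> [[|[|[|[|?]]]] ?].
Qed.

Lemma z4_4 (k : int) : z4 (2 ^+ 2 * k) = 0.
Proof. rewrite /z4 intrM. have -> : ((2 ^+ 2 : int)%:~R : 'Z_4) = 0 by apply/val_inj. by rewrite mul0r. Qed.

Lemma z4_eq (m m' k : int) : m - m' = 2 ^+ 2 * k -> z4 m = z4 m'.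
Proof.
move=> e; have : z4 (m - m') = 0 by rewrite e z4_4.
rewrite /z4 intrB => /eqP; rewrite subr_eq0 => /eqP //.
Qed.

Lemma k4_m1 : k4 (z4 (-1)) (z4 0) = 2%N.
Proof. by []. Qed.
Lemma k4_J : k4 (z4 0) (z4 1) = 1%N.
Proof. by []. Qed.
Lemma k4_1 : k4 (z4 1) (z4 0) = 0%N.
Proof. by []. Qed.
Lemma unit_near (L : fieldType) (v : L -> int) (x y : L) : is_dval v ->
  x != 0 -> v x = 0 -> vge v (x - y) 1 -> y != 0 /\ v y = 0.
Proof.
move=> hv x0 vx h.
have y0 : y != 0.
  apply/negP => /eqP y0; move: h; rewrite y0 subr0 => /(vgeP x0); lia.
split => //.
have hy : vge v y 0.
  have -> : y = x - (x - y) by ring.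
  apply: vgeB => //; [by right; rewrite vx | exact: vge_le h _].
have := vgeP y0 hy.
case: (boolP (1 <= v y)) => [h1 _|]; last by lia.
have : vge v x 1.
  have -> : x = y + (x - y) by ring.
  by apply: vgeD => //; right.
move/(vgeP x0); lia.
Qed.

Lemma approx_int (L : fieldType) (v : L -> int) (J x : L) (M N D : int) :
  is_dval v -> 0 < v 2 -> [pchar L] =i pred0 -> J ^+ 2 = -1 ->
  x != 0 -> v x = 0 -> D != 0 ->
  vge v (x - (M%:~R + N%:~R * J) / D%:~R) (3 * v 2) ->
  exists M' N' : int, vge v (x - (M'%:~R + N'%:~R * J)) (3 * v 2) /\ (N = 0 -> N' = 0).
Proof.
move=> hv hd hc hJ x0 vx D0 h.
have [hM _] := hv.
set y := (M%:~R + N%:~R * J) / D%:~R in h.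
have [y0' vy'] : y != 0 /\ v y = 0.
  apply: (unit_near hv x0 vx); apply: vge_le h _; lia.
have [e [k eD]] := dec2 D0.
have DL0 := intr_neq0 hc D0.
have D'0 : ((2 * k + 1)%:~R : L) != 0 by apply: intr_neq0 => //; lia.
have t0 : (2 : L) != 0 by exact: (intr_neq0 (L:=L) (m:=2) hc isT).
have eD' : (D%:~R : L) = 2 ^+ e * (2 * k + 1)%:~R by rewrite eD intrM rmorphXn.
have hMN : vge v (M%:~R + N%:~R * J) (e%:Z * v 2).
  have -> : (M%:~R + N%:~R * J : L) = y * D%:~R by rewrite /y; field.
  right; rewrite hM // vy' eD' hM ?expf_neq0 // (v2X e hv hc) (v_odd k hv hd hc); lia.
have [M1 [N1 [e1 e2]]] := div2e hv hd hc hJ hMN.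
exists ((2 * k + 1) * M1), ((2 * k + 1) * N1); split; last first.
  move=> N00; have : (2 ^+ e : int) * N1 == 0 by rewrite -e2 N00.
  rewrite mulf_eq0 expf_eq0 /= => /orP [/andP [_ //]|/eqP ->]; by rewrite mulr0.
have [t et] : exists t : int, 1 - (2 * k + 1) ^+ 2 = 2 ^+ 3 * t.
  case: (par_split k) => [[u ->]|[u ->]].
    by exists (- (u * (2 * u + 1))); ring.
  by exists (- ((2 * u + 1) * (u + 1))); ring.
have ey : x - (((2 * k + 1) * M1)%:~R + ((2 * k + 1) * N1)%:~R * J)
          = (x - y) + y * (1 - (2 * k + 1) ^+ 2)%:~R.
  rewrite /y eD' e1 e2 !intrM !intrB !rmorphXn /=; field.
  have D'0' : (2 * k%:~R + 1 : L) != 0 by move: D'0; rewrite intrD intrM.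
  by rewrite D'0' expf_neq0.
rewrite ey; apply: vgeD => //.
rewrite et intrM rmorphXn /=.
apply: vge_le (vgeM hv (or_intror (le_refl _) : vge v y (v y)) (vgeM hv (or_intror (le_refl _) : vge v (2 ^+ 3 : L) (v (2 ^+ 3))) (vge_int t hv))) _.
rewrite vy' (v2X 3 hv hc); lia.
Qed.

Lemma unit_pair (L : fieldType) (v : L -> int) (J x : L) (M N : int) :
  is_dval v -> 0 < v 2 -> [pchar L] =i pred0 -> J ^+ 2 = -1 ->
  x != 0 -> v x = 0 -> vge v (x - (M%:~R + N%:~R * J)) 1 ->
  odd4 (z4 M) != odd4 (z4 N).
Proof.
move=> hv hd hc hJ x0 vx h.
have [J0 vJ] := vJ0 hv hJ; have [n1J v1J'] := v1J hv hc hJ; have [hM _] := hv.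
suff : ~ vge v (M%:~R + N%:~R * J) 1.
  move=> hn; case: (par_split M) => [[k ek]|[k ek]]; case: (par_split N) => [[l el]|[l el]];
    rewrite ek el ?z4_odd; try by rewrite (negbTE (z4_even _)).
  - exfalso; apply: hn; rewrite ek el (_ : _ + _ = 2 * (k%:~R + l%:~R * J)); last by rewrite !intrM /=; ring.
    by apply: vge_le (vgeM hv (vge_refl v 2) (vgeD hv (vge_int k hv) (vge_le (vgeM hv (vge_int l hv) (vge_refl v J)) (_ : 0 <= 0 + v J)))) _; lia.
  - exfalso; apply: hn.
    have e : (M%:~R + N%:~R * J : L) = (2 * (k - l))%:~R + N%:~R * (1 + J).
      by rewrite ek el !intrD !intrM intrB /=; ring.
    rewrite e; apply: vgeD => //.
      by rewrite intrM; apply: vge_le (vgeM hv (vge_refl v 2) (vge_int (k - l) hv)) _; lia.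
    by apply: vge_le (vgeM hv (vge_int N hv) (vge_refl v (1 + J))) _; lia.
move=> hy.
have : vge v x 1.
  have -> : x = (x - (M%:~R + N%:~R * J)) + (M%:~R + N%:~R * J) by ring.
  exact: vgeD.
move/(vgeP x0); lia.
Qed.

Lemma cong_z4 (L : fieldType) (v : L -> int) (J x : L) (M N M' N' : int) :
  is_dval v -> 0 < v 2 -> [pchar L] =i pred0 -> J ^+ 2 = -1 ->
  vge v (x - (M%:~R + N%:~R * J)) (2 * v 2) ->
  vge v (x - (M'%:~R + N'%:~R * J)) (2 * v 2) ->
  z4 M = z4 M' /\ z4 N = z4 N'.
Proof.
move=> hv hd hc hJ h1 h2.
have h : vge v ((M - M')%:~R + (N - N')%:~R * J) (2%:Z * v 2).
  have -> : ((M - M')%:~R + (N - N')%:~R * J : L) =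
    (x - (M'%:~R + N'%:~R * J)) - (x - (M%:~R + N%:~R * J)) by rewrite !intrB; ring.
  by apply: vgeB.
have [a [b [ea eb]]] := div2e hv hd hc hJ h.
by split; [exact: z4_eq ea | exact: z4_eq eb].
Qed.

Definition chi_of (L : fieldType) (v : L -> int) (J x : L) : algC :=
  let p := epsilon (inhabits (0%Z, 0%Z))
    (fun p : int * int => vge v (x - (p.1%:~R + p.2%:~R * J)) (2 * v 2)) in
  'i ^+ k4 (z4 p.1) (z4 p.2).

Lemma chi_spec (L : fieldType) (v : L -> int) (J x : L) (M N : int) :
  is_dval v -> 0 < v 2 -> [pchar L] =i pred0 -> J ^+ 2 = -1 ->
  vge v (x - (M%:~R + N%:~R * J)) (2 * v 2) ->
  chi_of v J x = 'i ^+ k4 (z4 M) (z4 N).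
Proof.
move=> hv hd hc hJ h.
rewrite /chi_of.
set P := fun p : int * int => _.
have hP : P (epsilon (inhabits (0%Z, 0%Z)) P) by apply: epsilon_spec; exists (M, N).
have [-> ->] := cong_z4 hv hd hc hJ hP h.
by [].
Qed.
Lemma vge_sig (L : fieldType) (v : L -> int) (sigma : {rmorphism L -> L}) (w : L) (n : int) :
  (forall x, x != 0 -> v (sigma x) = v x) -> vge v w n -> vge v (sigma w) n.
Proof.
move=> hs [->|h]; first by rewrite rmorph0; left.
case: (eqVneq w 0) => [->|w0]; first by rewrite rmorph0; left.
by right; rewrite hs.
Qed.

Lemma sqrt1 (L : fieldType) (v : L -> int) (sigma : {rmorphism L -> L}) (w : L) :
  is_dval v -> 0 < v 2 -> [pchar L] =i pred0 -> vcomplete v ->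
  (forall x, x != 0 -> v (sigma x) = v x) -> sigma w = w ->
  vge v (w - 1) (3 * v 2) -> exists z, z != 0 /\ z * z = w /\ sigma z = z.
Proof.
move=> hv hd hc hcomp hs hw h.
have t0 : (2 : L) != 0 by exact: (intr_neq0 (L:=L) (m:=2) hc isT).
have f0 : (2 ^+ 2 : L) != 0 by rewrite expf_neq0.
have f4 : (4 : L) != 0 by exact: (intr_neq0 (L:=L) (m:=4) hc isT).
set t := (w - 1) * (2 ^+ 2)^-1.
have ht : vge v t (v 2).
  apply: vge_le (vgeM hv h (or_intror (le_refl _) : vge v ((2 ^+ 2 : L)^-1) (v ((2 ^+ 2 : L)^-1)))) _.
  rewrite (vV hv f0) (v2X 2 hv hc); lia.
have hst : sigma t = t.
  by rewrite /t rmorphM fmorphV rmorphB rmorph1 rmorphXn rmorph_nat hw.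
pose f := fun u : L => t - u ^+ 2.
pose s := fun n : nat => iter n f 0.
have sS : forall n, s n.+1 = t - s n ^+ 2 by [].
have hsn : forall n, vge v (s n) (v 2).
  elim=> [|n ih]; first by left.
  rewrite sS; apply: vgeB => //; rewrite expr2.
  by apply: vge_le (vgeM hv ih ih) _; lia.
have hsig : forall n, sigma (s n) = s n.
  elim=> [|n ih]; first by rewrite rmorph0.
  by rewrite sS rmorphB rmorphXn ih hst.
have hdiff : forall n : nat, vge v (s n.+1 - s n) (n.+1%:Z * v 2).
  elim=> [|n ih].
    by rewrite sS /s /= expr0n /= !subr0 mul1r.
  have -> : s n.+2 - s n.+1 = - ((s n.+1 - s n) * (s n.+1 + s n)).
    rewrite !sS; ring.
  apply: vgeN => //; apply: vge_le (vgeM hv ih (vgeD hv (hsn _) (hsn _))) _; lia.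
have hcau : forall N d : nat, vge v (s (N + d)%N - s N) (N.+1%:Z * v 2).
  move=> N; elim=> [|d ih]; first by rewrite addn0 subrr; left.
  have -> : s (N + d.+1)%N - s N = (s (N + d).+1 - s (N + d)%N) + (s (N + d)%N - s N).
    by rewrite addnS; ring.
  apply: vgeD => //; apply: vge_le (hdiff _) _; lia.
have hC : forall n : int, exists N : nat, forall m k : nat,
    (N <= m)%N -> (N <= k)%N -> vge v (s m - s k) n.
  move=> n; exists (absz n) => m k hm hk.
  have -> : s m - s k = (s (absz n + (m - absz n))%N - s (absz n)) - (s (absz n + (k - absz n))%N - s (absz n)).
    by rewrite !subnKC //; ring.
  by apply: vgeB => //; apply: vge_le (hcau _ _) _; nia.
have [l hl] := hcomp s hC.
have hlim : forall n : int, exists N : nat, 0 <= n ->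
   vge v (s N - l) n /\ vge v (s N.+1 - l) n /\ vge v l 0.
  move=> n; have [N hN] := hl n; exists N => n0.
  have h1 := hN N (leqnn _); have h2 := hN N.+1 (leqnSn _).
  split => //; split => //.
  have -> : l = s N - (s N - l) by ring.
  apply: vgeB => //; first by apply: vge_le (hsn N) _; lia.
  exact: vge_le h1 n0.
have hE : l - t + l ^+ 2 = 0.
  apply: vge_eq0 => n.
  have [N hN] := hlim (absz n).
  have [h1 [h2 h3]] := hN isT.
  have -> : l - t + l ^+ 2 = - (s N.+1 - l) + (l - s N) * (l + s N) by rewrite sS; ring.
  apply: vge_le (_ : vge v _ (absz n)%:Z) _; last by lia.
  apply: vgeD => //; first exact: vgeN.
  apply: vge_le (vgeM hv (vge_sym hv h1) (vgeD hv h3 (vge_le (hsn N) _))) _; lia.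
have hsl : sigma l = l.
  apply/eqP; rewrite -subr_eq0; apply/eqP; apply: vge_eq0 => n.
  have [N hN] := hlim (absz n).
  have [h1 _] := hN isT.
  have -> : sigma l - l = sigma (l - s N) - (l - s N) by rewrite rmorphB hsig; ring.
  apply: vge_le (_ : vge v _ (absz n)%:Z) _; last by lia.
  apply: vgeB => //; [apply: vge_sig => //; exact: vge_sym | exact: vge_sym].
exists (1 + 2 * l); split; last split.
- apply/negP => /eqP z0.
  have ew : w = (1 + 2 * l) * (1 + 2 * l).
    have e4 : w = 1 + 2 ^+ 2 * t.
      by rewrite /t; field.
    rewrite e4 -[t](addr0) -hE; ring.
  move: h; rewrite ew z0 mul0r sub0r => -[/eqP|]; first by rewrite oppr_eq0 oner_eq0.
  rewrite (vPN _ hv) (vP1 hv); lia.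
- have e4 : w = 1 + 2 ^+ 2 * t by rewrite /t; field.
  rewrite e4 -[t](addr0) -hE; ring.
- by rewrite rmorphD rmorph1 rmorphM rmorph_nat hsl.
Qed.
Lemma SQ1 (L : fieldType) : SQ (1 : L).
Proof. by exists 1, 1; split => //; rewrite divr1. Qed.

Lemma cl_pow (L : fieldType) (v : L -> int) (S : L -> Prop) x (k : nat) : is_dval v ->
  S 1 -> (forall a b, S a -> S b -> S (a * b)) ->
  vclosure v S x -> vclosure v S (x ^+ k).
Proof.
move=> hv h1 hS hx; elim: k => [|k ih]; first by rewrite expr0; exact: cl_of.
by rewrite exprS; apply: cl_mul.
Qed.

Lemma cong_mul (L : fieldType) (v : L -> int) (x y X Y : L) n : is_dval v ->
  vge v (x - X) n -> vge v (y - Y) n -> vge v x 0 -> vge v Y 0 ->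
  vge v (x * y - X * Y) n.
Proof.
move=> hv h1 h2 h3 h4.
have -> : x * y - X * Y = x * (y - Y) + (x - X) * Y by ring.
apply: vgeD => //.
  by apply: vge_le (vgeM hv h3 h2) _; rewrite add0r.
by apply: vge_le (vgeM hv h1 h4) _; rewrite addr0.
Qed.

Lemma pair_mul (L : fieldType) (J : L) (M N M' N' : int) : J ^+ 2 = -1 ->
  (M%:~R + N%:~R * J) * (M'%:~R + N'%:~R * J) =
  (M * M' - N * N')%:~R + (M * N' + N * M')%:~R * J.
Proof.
move=> hJ.
have e : (M%:~R + N%:~R * J) * (M'%:~R + N'%:~R * J) =
  (M * M' - N * N')%:~R + (M * N' + N * M')%:~R * J + N%:~R * N'%:~R * (J ^+ 2 + 1) :> L.
  by rewrite intrB intrD !intrM; ring.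
by rewrite e hJ addNr mulr0 addr0.
Qed.

Lemma i4 : ('i : algC) ^+ 4 = 1.
Proof. by rewrite (exprM 'i 2 2) sqrCi expr2 mulrNN mulr1. Qed.

Lemma i3 : ('i : algC) ^+ 3 = - 'i.
Proof. by rewrite exprS sqrCi mulrN1. Qed.
Unset Implicit Arguments.
Theorem mainTheorem7
  (K : fieldType) (a j : K) (rho : {rmorphism K -> K})
  (L : fieldType) (v : L -> int) (iota : {rmorphism K -> L})
  (sigma : {rmorphism L -> L}) :
  (* K = Q(alpha, i) *)
  [pchar K] =i pred0 ->
  [\/ a ^+ 3 - 93 * a + 124 = 0,
      a ^+ 3 - 129 * a - 344 = 0
    | a ^+ 3 - 21 * a - 28 = 0] ->
  j ^+ 2 = -1 ->
  generated_by a j ->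
  (* rho = complex conjugation on K *)
  rho a = a -> rho j = - j ->
  (* (L, v, iota) is the completion K_P of K at a prime P above 2 *)
  is_dval v -> 0 < v 2 -> vcomplete v -> vdense v iota ->
  (* sigma = the continuous extension of rho to K_P *)
  (forall x : K, sigma (iota x) = iota (rho x)) ->
  (forall x : L, x != 0 -> v (sigma x) = v x) ->
  exists chi : L -> algC,
    (* homomorphism O_{K_P}^x -> {+-1, +-i} *)
    (forall x y : L, vunit v x -> vunit v y -> chi (x * y) = chi x * chi y) /\
    (forall x : L, vunit v x -> chi x ^+ 4 = 1) /\
    (* restriction to O_{F_p}^x (F_p = closure of iota(Q(alpha))) is chi_p,
       chi_p(x) = 1 iff x is a norm y * sigma y from K_P^x *)
    (forall x : L, vunit v x -> vclosure v (fun z => exists y : K, in_Qa a y /\ z = iota y) x ->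
       ((exists y : L, y != 0 /\ y * sigma y = x) -> chi x = 1) /\
       (~ (exists y : L, y != 0 /\ y * sigma y = x) -> chi x = -1)) /\
    chi (iota j) = 'i /\
    (forall x : L, vunit v x -> chi (sigma x) = (chi x)^*).
Proof.
move=> hcK hcub hj hgen hra hrj hv hd hcomp hdense hsig hsv.
have [hM _] := hv.
have hc : [pchar L] =i pred0 by move=> p; rewrite (fmorph_pchar iota) hcK.
set J := iota j; set A := iota a.
have hJ : J ^+ 2 = -1 by rewrite /J -rmorphXn hj rmorphN rmorph1.
have [J0 vJ] := vJ0 hv hJ.
have hsJ : sigma J = - J by rewrite /J hsig hrj rmorphN.
have t0 : (2 : L) != 0 by exact: (intr_neq0 (L:=L) (m:=2) hc isT).
have hAcl : vclosure v (@SQ L) A.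
  have im1 : forall p q : nat, iota (a ^+ 3 - p%:R * a + q%:R) = A ^+ 3 - p%:R * A + q%:R.
    by move=> p q; rewrite rmorphD rmorphB rmorphXn rmorphM !rmorph_nat.
  have im2 : forall p q : nat, iota (a ^+ 3 - p%:R * a - q%:R) = A ^+ 3 - p%:R * A - q%:R.
    by move=> p q; rewrite !rmorphB rmorphXn rmorphM !rmorph_nat.
  case: hcub => h; have := congr1 iota h; rewrite rmorph0 ?im1 ?im2 => hA.
  - have hf : A ^+ 3 + (-93)%:~R * A + 124%:~R = 0 by rewrite -hA; ring.
    apply: (@cubic_gen L v A (-93) 124 12 1 3 (-1) 9 (-10) 169 (-23) (-17)) => //.
    by rewrite -[LHS]subr0 -hf; ring.
  - have hf : A ^+ 3 + (-129)%:~R * A + (-344)%:~R = 0 by rewrite -hA; ring.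
    apply: (@cubic_gen L v A (-129) (-344) 8 3 5 (-1) 13 14 31 (-26) (-14)) => //.
    by rewrite -[LHS]subr0 -hf; ring.
  - have hf : A ^+ 3 + (-21)%:~R * A + (-28)%:~R = 0 by rewrite -hA; ring.
    apply: (@cubic_gen L v A (-21) (-28) 4 1 11 (-1) 5 (-1) 13 (-5) 85) => //.
    by rewrite -[LHS]subr0 -hf; ring.
have SQJa := SQJ_add (J:=J) hc; have SQJm := SQJ_mul hc hJ.
have SQa := SQ_add hc; have SQm := SQ_mul hc.
have hKcl : forall y : K, vclosure v (SQJ J) (iota y).
  move=> y; have [c ->] := hgen y.
  rewrite rmorph_sum; apply: cl_sum => //; first exact: SQJ0.
  move=> k; rewrite rmorph_sum; apply: cl_sum => //; first exact: SQJ0.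
  move=> l; rewrite rmorphM rmorphM fmorph_rat !rmorphXn -/A -/J.
  apply: cl_mul => //; first apply: cl_mul => //.
  - by apply: cl_of; apply: SQJ_of_SQ; exact: SQ_ratr.
  - apply: cl_pow => //; first exact: (@SQJ_of_SQ L J 1 (@SQ1 L)).
    exact: cl_mono (@SQJ_of_SQ L J) hAcl.
  - apply: cl_pow => //; first exact: (@SQJ_of_SQ L J 1 (@SQ1 L)).
    by apply: cl_of; exact: SQJ_J.
have hLcl : forall x : L, vclosure v (SQJ J) x.
  move=> x n; have [y hy] := hdense x n; have [s [hs hys]] := hKcl y n.
  by exists s; split => //; exact: vge_trans hy hys.
set FS := fun z => exists y : K, in_Qa a y /\ z = iota y.
have hFS : forall z, FS z -> vclosure v (@SQ L) z /\ sigma z = z.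
  move=> z [y [[c ->] ->]]; split.
    rewrite rmorph_sum; apply: cl_sum => //; first exact: SQ0.
    move=> k; rewrite rmorphM fmorph_rat !rmorphXn -/A.
    apply: cl_mul => //; first by apply: cl_of; exact: SQ_ratr.
    by apply: cl_pow => //; exact: (@SQ1 L).
  rewrite hsig; apply: (congr1 iota); rewrite rmorph_sum; apply: eq_bigr => k _.
  by rewrite rmorphM fmorph_rat rmorphXn hra.
have hFcl : forall x, vclosure v FS x -> vclosure v (@SQ L) x /\ sigma x = x.
  move=> x hx; split.
    by apply: cl_cl => //; apply: cl_mono hx => z /hFS [].
  apply/eqP; rewrite -subr_eq0; apply/eqP; apply: (vge_eq0 (v:=v)) => n.
  have [z [hz hxz]] := hx n; have [_ sz] := hFS z hz.
  have -> : sigma x - x = sigma (x - z) - (x - z) by rewrite rmorphB sz; ring.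
  by apply: vgeB => //; exact: (vge_sig hsv hxz).
have cls : forall x, x != 0 -> v x = 0 -> exists M N : int,
    vge v (x - (M%:~R + N%:~R * J)) (3 * v 2).
  move=> x x0 vx; have [s [[M [N [D [D0 ->]]]] hs]] := hLcl x (3 * v 2).
  have [M' [N' [h _]]] := approx_int hv hd hc hJ x0 vx D0 hs.
  by exists M', N'.
have clsF : forall x, x != 0 -> v x = 0 -> vclosure v (@SQ L) x -> exists M : int,
    vge v (x - M%:~R) (3 * v 2).
  move=> x x0 vx hx; have [s [[M [D [D0 ->]]] hs]] := hx (3 * v 2).
  have hs' : vge v (x - (M%:~R + 0%:~R * J) / D%:~R) (3 * v 2) by rewrite mul0r addr0.
  have [M' [N' [h hN]]] := approx_int hv hd hc hJ x0 vx D0 hs'.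
  by exists M'; move: h; rewrite (hN erefl) mul0r addr0.
have w2 : forall x X, vge v (x - X) (3 * v 2) -> vge v (x - X) (2 * v 2).
  by move=> x X h; apply: vge_le h _; lia.
have w1 : forall x X, vge v (x - X) (3 * v 2) -> vge v (x - X) 1.
  by move=> x X h; apply: vge_le h _; lia.
have hpair0 : forall M N : int, vge v (M%:~R + N%:~R * J) 0.
  move=> M N; apply: vgeD => //; first exact: vge_int.
  by apply: vge_le (vgeM hv (vge_int N hv) (vge_refl v J)) _; rewrite vJ.
have hcs := fun x M N => @chi_spec L v J x M N hv hd hc hJ.
exists (chi_of v J); split; last split; last split; last split.
-
  move=> x y [x0 vx] [y0 vy].
  have [M [N hx]] := cls x x0 vx; have [M' [N' hy]] := cls y y0 vy.
  have hxy : vge v (x * y - ((M * M' - N * N')%:~R + (M * N' + N * M')%:~R * J)) (2 * v 2).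
    rewrite -pair_mul //; apply: cong_mul => //; try exact: w2.
    by right; rewrite vx.
  rewrite (hcs _ _ _ hxy) (hcs _ _ _ (w2 _ _ hx)) (hcs _ _ _ (w2 _ _ hy)).
  rewrite /z4 intrB intrD !intrM -/(z4 M) -/(z4 N) -/(z4 M') -/(z4 N') kmul.
  + by rewrite -exprD (expr_mod _ i4).
  + exact: unit_pair hv hd hc hJ x0 vx (w1 _ _ hx).
  + exact: unit_pair hv hd hc hJ y0 vy (w1 _ _ hy).
-
  move=> x [x0 vx]; have [M [N hx]] := cls x x0 vx.
  by rewrite (hcs _ _ _ (w2 _ _ hx)) exprAC i4 expr1n.
-
  move=> x [x0 vx] hxF; have [hxQ hsx] := hFcl x hxF.
  split.
  + move=> [y [y0 hyx]].
    have sy0 : sigma y != 0 by rewrite fmorph_eq0.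
    have vy : v y = 0.
      have := congr1 v hyx; rewrite hM // hsv // vx; lia.
    have [M [N hy]] := cls y y0 vy.
    have hsy : vge v (sigma y - (M%:~R + (- N)%:~R * J)) (3 * v 2).
      have -> : sigma y - (M%:~R + (- N)%:~R * J) = sigma (y - (M%:~R + N%:~R * J)).
        by rewrite rmorphB rmorphD rmorphM !rmorph_int hsJ intrN; ring.
      exact: vge_sig.
    have hxy : vge v (x - ((M * M - N * (- N))%:~R + (M * (- N) + N * M)%:~R * J)) (2 * v 2).
      rewrite -pair_mul // -hyx; apply: cong_mul => //; try exact: w2.
      by right; rewrite vy.
    rewrite (hcs _ _ _ hxy) /z4 intrB intrD !intrM intrN -/(z4 M) -/(z4 N).
    have kn := knorm (unit_pair hv hd hc hJ y0 vy (w1 _ _ hy)).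
    have -> : z4 M * z4 M - z4 N * - z4 N = z4 M * z4 M + z4 N * z4 N by rewrite mulrN opprK.
    have -> : z4 M * - z4 N + z4 N * z4 M = 0 by rewrite mulrN mulrC addNr.
    by rewrite kn expr0.
  + move=> hnn.
    have [M hM8] := clsF x x0 vx hxQ.
    have fin : forall (u : int), M = 4 * u + 3 -> chi_of v J x = -1.
      move=> u eu.
      have h4 : vge v (x - ((-1)%:~R + 0%:~R * J)) (2 * v 2).
        have -> : x - ((-1)%:~R + 0%:~R * J) = (x - M%:~R) + (2 ^+ 2 * (u + 1)%:~R) :> L.
          by rewrite eu !intrD !intrM /= ?intrN; ring.
        apply: vgeD => //; first exact: w2.
        apply: vge_le (vgeM hv (_ : vge v (2 ^+ 2 : L) (v (2 ^+ 2))) (vge_int (u + 1) hv)) _.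
          by right.
        by rewrite (v2X 2 hv hc); lia.
      by rewrite (hcs _ _ _ h4) k4_m1 sqrCi.
    have m8 : forall (w0 : int) (c : int), M = 8 * w0 + c ->
        vge v (x - c%:~R) (3 * v 2).
      move=> w0 c ec.
      have -> : x - c%:~R = (x - M%:~R) + (2 ^+ 3 * w0%:~R) :> L.
        by rewrite ec !intrD !intrM /=; ring.
      apply: vgeD => //.
      apply: vge_le (vgeM hv (_ : vge v (2 ^+ 3 : L) (v (2 ^+ 3))) (vge_int w0 hv)) _.
        by right.
      by rewrite (v2X 3 hv hc); lia.
    case: (par_split M) => [[k ek]|[k ek]].
      exfalso.
      have : vge v x 1.
        have -> : x = (x - M%:~R) + M%:~R by ring.
        apply: vgeD => //; first exact: w1.
        rewrite ek intrM; apply: vge_le (vgeM hv (vge_refl v 2) (vge_int k hv)) _; lia.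
      move/(vgeP x0); lia.
    case: (par_split k) => [[u eu]|[u eu]]; last by apply: (fin u); lia.
    exfalso; apply: hnn.
    case: (par_split u) => [[w0 ew]|[w0 ew]].
    * have h1 : vge v (x - 1) (3 * v 2) by apply: (m8 w0 1); lia.
      have [z [z0 [ez sz]]] := sqrt1 hv hd hc hcomp hsv hsx h1.
      by exists z; split => //; rewrite sz.
    * have h5 := m8 w0 5 ltac:(lia).
      have f5 : (5 : L) != 0 by exact: (intr_neq0 (L:=L) (m:=5) hc isT).
      have v5 : v (5 : L) = 0 by exact: (@v_odd L v 2 hv hd hc).
      have h1 : vge v (x / 5 - 1) (3 * v 2).
        have -> : x / 5 - 1 = (x - 5%:~R) * 5^-1 by rewrite /=; field.
        apply: vge_le (vgeM hv h5 (or_intror (le_refl _) : vge v ((5 : L)^-1) (v ((5 : L)^-1)))) _.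
        rewrite (vV hv f5) v5; lia.
      have hs5 : sigma (x / 5) = x / 5 by rewrite fmorph_div rmorph_nat hsx.
      have [z [z0 [ez sz]]] := sqrt1 hv hd hc hcomp hsv hs5 h1.
      exists ((1 + 2 * J) * z); split.
        rewrite mulf_neq0 //; apply/negP => /eqP e12.
        have : (1 + 2 * J) * (1 - 2 * J) = 5.
          have -> : (1 + 2 * J) * (1 - 2 * J) = 1 - 4 * J ^+ 2 by ring.
          by rewrite hJ; ring.
        by rewrite e12 mul0r => /esym/eqP; rewrite (negbTE f5).
      rewrite rmorphM rmorphD rmorph1 rmorphM rmorph_nat hsJ sz.
      have -> : (1 + 2 * J) * z * ((1 + 2 * - J) * z) = (1 - 4 * J ^+ 2) * (z * z) by ring.
      by rewrite ez hJ; field.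
-
  rewrite (hcs (iota j) 0 1); first by rewrite k4_J expr1.
  by rewrite /= mul1r add0r subrr; left.
-
  move=> x [x0 vx]; have [M [N hx]] := cls x x0 vx.
  have hsx : vge v (sigma x - (M%:~R + (- N)%:~R * J)) (2 * v 2).
    have -> : sigma x - (M%:~R + (- N)%:~R * J) = sigma (x - (M%:~R + N%:~R * J)).
      by rewrite rmorphB rmorphD rmorphM !rmorph_int hsJ intrN; ring.
    exact: vge_sig (w2 _ _ hx).
  rewrite (hcs _ _ _ hsx) (hcs _ _ _ (w2 _ _ hx)) /z4 intrN -/(z4 M) -/(z4 N).
  rewrite kconj; last exact: unit_pair hv hd hc hJ x0 vx (w1 _ _ hx).
  by rewrite (expr_mod _ i4) rmorphXn /= (conjCi algC) -i3 -exprM.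
Qed.
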